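(* For $i=1,\dots,d$ let $\{I_n^{(i)}\}_{n=1}^\infty$ be increasing sequences of symmetric integer intervals $I_n^{(i)}=[-a_n^{(i)};a_n^{(i)}]\subseteq\mathbb Z$. Then the sets $W_n=I_n^{(1)}\times\dots\times I_n^{(d)}\subseteq\mathbb Z^d$ form a $2^d$-incompressible sequence in $\mathbb Z^d$.
   Context: $[a;b]$ denotes $\{a,a+1,\dots,b\}$. In the additive group $\mathbb Z^d$, a sequence of translates $\{W_{n(i)}+f_i\}_{i=1}^I$ is incremental if $n(1)\ge\dots\ge n(I)$ and $f_i\notin\bigcup_{j<i}(W_{n(j)}+f_j)$. An increasing sequence $\{W_n\}$ of finite sets containing $0$ is $C$-incompressible if for every incremental sequence at most $C$ of the sets $W_{n(i)}+f_i$ contain $0$. *)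

(* Defs.v *)
From mathcomp Require Import all_boot all_order all_algebra.
Set Implicit Arguments. Unset Strict Implicit. Unset Printing Implicit Defensive.
Import Order.TTheory GRing.Theory Num.Theory.
Local Open Scope ring_scope.

Definition pt (d : nat) := {ffun 'I_d -> int}.

Definition zero_pt (d : nat) : pt d := [ffun _ => 0].

(* x \in W + f  <->  x - f \in W *)
Definition in_translate (d : nat) (W : pred (pt d)) (f x : pt d) : bool :=
  W [ffun i => x i - f i].

Definition finite_set (d : nat) (A : pred (pt d)) : Prop :=
  exists s : seq (pt d), forall x, A x -> x \in s.

(* A finite sequence {W_{n(i)} + f_i}_{i=1}^I, encoded as the list of pairs
   (n(i), f_i), is incremental: n(1) >= ... >= n(I) and
   f_i \notin \bigcup_{j<i} (W_{n(j)} + f_j). *)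
Definition incremental (d : nat) (W : nat -> pred (pt d))
    (s : seq (nat * pt d)) : Prop :=
  (forall i j, (i <= j < size s)%N ->
      ((nth (0%N, zero_pt d) s j).1 <= (nth (0%N, zero_pt d) s i).1)%N) /\
  (forall i j, (j < i < size s)%N ->
      ~~ in_translate (W (nth (0%N, zero_pt d) s j).1)
                      (nth (0%N, zero_pt d) s j).2
                      (nth (0%N, zero_pt d) s i).2).

Definition num_containing_zero (d : nat) (W : nat -> pred (pt d))
    (s : seq (nat * pt d)) : nat :=
  count (fun p => in_translate (W p.1) p.2 (zero_pt d)) s.

(* {W_n}_{n>=1} (indexed by n : nat; only n >= 1 is used) is an increasing
   sequence of finite sets containing 0, and is C-incompressible. *)
Definition incompressible (d : nat) (C : nat) (W : nat -> pred (pt d)) : Prop :=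
  (forall n, (1 <= n)%N -> forall x, W n x -> W n.+1 x) /\
  (forall n, (1 <= n)%N -> finite_set (W n)) /\
  (forall n, (1 <= n)%N -> W n (zero_pt d)) /\
  (forall s : seq (nat * pt d),
      all (fun p => (1 <= p.1)%N) s -> incremental W s ->
      (num_containing_zero W s <= C)%N).

Definition box (d : nat) (a : 'I_d -> nat -> nat) (n : nat) : pred (pt d) :=
  fun x => [forall i, `|x i| <= (a i n)%:Z].

(* Main.v *)
Require Import Defs.
From mathcomp Require Import all_boot all_order all_algebra.
From mathcomp Require Import zify.
Import Order.TTheory GRing.Theory Num.Theory.

Lemma cnt_card (T : Type) (p : pred T) (s : seq T) x0 :
  count p s = #|[pred i : 'I_(size s) | p (nth x0 s i)]|.
Proof.
rewrite -{1}(mkseq_nth x0 s) /mkseq -val_enum_ord -map_comp count_map cardE /enum_mem size_filter -enumT.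
rewrite (eq_filter (a2:=predT)) // filter_predT.
by apply: eq_count.
Qed.

Lemma int_same_sign (x y : int) (A : int) : ((0 <= x) = (0 <= y))%R ->
  (`|x| <= A)%R -> (`|y| <= A)%R -> (`|x - y| <= A)%R.
Proof. move=> h; lia. Qed.

Theorem proposition2p5 (d : nat) (a : 'I_d -> nat -> nat)
  (Hinc : forall (i : 'I_d) (n : nat), (1 <= n)%N -> (a i n <= a i n.+1)%N) :
  incompressible (2 ^ d)%N (box a).
Proof.
have Hmono : forall k m n, (1 <= m)%N -> (m <= n)%N -> (a k m <= a k n)%N.
  move=> k m n Hm; elim: n => [|n IH]; first by rewrite leqn0 => /eqP ->.
  rewrite leq_eqVlt => /orP [/eqP -> //|]; rewrite ltnS => mn.
  exact: leq_trans (IH mn) (Hinc _ _ (leq_trans Hm mn)).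
split; [|split; [|split]].
- move=> n Hn x /forallP Hx; apply/forallP => k.
  apply: le_trans (Hx k) _; rewrite lez_nat; exact: Hinc.
- move=> n Hn.
  set M := (\max_(k : 'I_d) a k n)%N.
  exists [seq [ffun k => (Posz (g k : nat) - Posz M)%R] | g : {ffun 'I_d -> 'I_(M + M).+1}].
  move=> x /forallP Hx.
  have HM : forall k, (`|x k| <= (Posz M))%R.
    move=> k; apply: le_trans (Hx k) _; rewrite lez_nat; exact: (leq_bigmax k).
  clearbody M.
  apply/mapP; exists [ffun k => inord (absz (x k + (Posz M))%R)]; first exact: mem_enum.
  apply/ffunP => k; rewrite !ffunE inordK; last by have := HM k; move: (x k) => y; lia.
  have := HM k; move: (x k) => y; lia.
- move=> n Hn; rewrite /box; apply/forallP => k; rewrite ffunE normr0 //.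
- move=> s Hall [Hdec Hnot].
  rewrite /num_containing_zero (cnt_card _ _ _ (0%N, zero_pt d)).
  set x0 := (0%N, zero_pt d).
  set S := [pred i : 'I_(size s) | _].
  pose g (i : 'I_(size s)) : {ffun 'I_d -> bool} :=
    [ffun k => (0 <= (nth x0 s i).2 k)%R].
  have Hn1 : forall i : 'I_(size s), (1 <= (nth x0 s i).1)%N.
    by move=> i; apply: (allP Hall); apply: mem_nth.
  have key : forall i j : 'I_(size s), (j < i)%N -> i \in S -> j \in S ->
      g i = g j -> False.
    move=> i j ji Si Sj gij.
    have := Hnot i j; rewrite ji ltn_ord => /(_ isT) /negP; apply.
    rewrite /in_translate /box; apply/forallP => k.
    move: Si Sj; rewrite !inE /in_translate /box => /forallP /(_ k) Si /forallP /(_ k) Sj.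
    rewrite !ffunE in Si Sj *.
    have := Hdec j i; rewrite (ltnW ji) ltn_ord => /(_ isT) Hji.
    have Hak := Hmono k _ _ (Hn1 i) Hji.
    have gk : (0 <= (nth x0 s i).2 k)%R = (0 <= (nth x0 s j).2 k)%R.
      by have := congr1 (fun f : {ffun 'I_d -> bool} => f k) gij; rewrite /g !ffunE.
    rewrite -/x0 in Hak.
    move: Si Sj Hak gk.
    move: ((nth x0 s i).2 k) ((nth x0 s j).2 k) (a k (nth x0 s i).1) (a k (nth x0 s j).1).
    move=> y z A B; lia.
  have inj : {in S &, injective g}.
    move=> i j Si Sj gij; case: (ltngtP i j) => h.
    + by exfalso; apply: (key j i h Sj Si); rewrite gij.
    + by exfalso; exact: (key i j h Si Sj gij).
    + exact: val_inj.
  rewrite -(card_in_imset inj).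
  apply: leq_trans (max_card _) _.
  by rewrite card_ffun card_bool card_ord.
Qed.
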